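(* Let $x$ be a host whose flow cardinality is $N(x)$ and whose true subnet cardinality with respect to a targeted subnet of prefix length $l$ is $C(x)$, with $N(x)>C(x)$. Let $G$ be the IP segment width and $r=\lfloor l/G\rfloor$, with $r,G$ positive integers and $rG<32$. Let $\hat{C}_{full}(x)$ and $\hat{C}_{host}(x)$ be the estimated subnet cardinalities obtained by hashing full IP addresses and by hashing only host addresses, respectively, whose expected estimation errors are $$\mathbb{E}\left[|\hat{C}_{full}(x)-C(x)|\right]=2^{32}\left[1-\left(1-2^{-32}\right)^{N(x)-C(x)}\right],$$ $$\mathbb{E}\left[|\hat{C}_{host}(x)-C(x)|\right]=2^{32-rG}\left[1-\left(1-2^{rG-32}\right)^{(N(x)-C(x))(1/2)^{r}}\right].$$ Then $$\mathbb{E}\left[|\hat{C}_{full}(x)-C(x)|\right]>\mathbb{E}\left[|\hat{C}_{host}(x)-C(x)|\right].$$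
   Context: Setting: a host $x$ communicates with $N(x)$ distinct peers (32-bit IP addresses), $C(x)$ of which lie in a targeted subnet with prefix length $l$. Under the halved-segment hashing strategy, addresses are split into $G$-bit segments; a peer outside the subnet is mistakenly inferred to share the subnet prefix with probability $(1/2)^{\lfloor l/G\rfloor}$. Full-address hashing hashes entire addresses into a bitmap of size $2^{32}$ and all $N(x)-C(x)$ outside peers contaminate the count; host-address hashing hashes only the last $32-\lfloor l/G\rfloor G$ bits into a bitmap of size $2^{32-\lfloor l/G\rfloor G}$ and only the misinferred outside peers, expected number $(N(x)-C(x))(1/2)^{\lfloor l/G\rfloor}$, contaminate the count. With bitmap size $M$ and $U$ contaminating flows hashed independently and uniformly, the expected estimation error is $M[1-(1-M^{-1})^U]$, which gives the two displayed formulas. *)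

(* Defs.v *)
From Stdlib Require Import Reals.

(* Main.v *)
Require Import Defs.
From Stdlib Require Import Reals Lra Lia.
Open Scope R_scope.

Lemma hstep (m : R) (n : nat) : m <> 0 ->
  m * (1 - (1 - / m) ^ S n) = 1 + (1 - / m) * (m * (1 - (1 - / m) ^ n)).
Proof. intro Hm. simpl. field. exact Hm. Qed.

Lemma hmono (M m : R) (n : nat) : 2 <= m -> m <= M ->
  m * (1 - (1 - / m) ^ n) <= M * (1 - (1 - / M) ^ n) /\ 0 <= m * (1 - (1 - / m) ^ n).
Proof.
  intros H2 HM.
  assert (Hb : 0 <= 1 - / m <= 1 - / M).
  { split. assert (/ m <= / 2) by (apply Rinv_le_contravar; lra). lra.
    assert (/ M <= / m) by (apply Rinv_le_contravar; lra). lra. }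
  induction n as [|n IH].
  - simpl. lra.
  - rewrite (hstep m n) by lra. rewrite (hstep M n) by lra.
    destruct IH as [IH1 IH2]. split.
    + apply Rplus_le_compat_l.
      apply Rle_trans with ((1 - / M) * (m * (1 - (1 - / m) ^ n))).
      * apply Rmult_le_compat_r; lra.
      * apply Rmult_le_compat_l; lra.
    + assert (0 <= (1 - / m) * (m * (1 - (1 - / m) ^ n))) by (apply Rmult_le_pos; lra). lra.
Qed.

Theorem theorem2 (N C r G : nat)
  (hNC : (C < N)%nat) (hr : (0 < r)%nat) (hG : (0 < G)%nat) (hrG : (r * G < 32)%nat) :
  (* E|C_full - C| = 2^32 [1 - (1 - 2^-32)^(N-C)] *)
  2 ^ 32 * (1 - (1 - / 2 ^ 32) ^ (N - C))
  >
  (* E|C_host - C| = 2^(32-rG) [1 - (1 - 2^(rG-32))^((N-C)(1/2)^r)] *)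
  2 ^ (32 - r * G) * (1 - Rpower (1 - / 2 ^ (32 - r * G)) (INR (N - C) * (1/2) ^ r)).
Proof.
  set (n := (N - C)%nat).
  set (k := (32 - r * G)%nat).
  assert (Hn : (1 <= n)%nat) by (unfold n; lia).
  assert (Hk1 : (1 <= k)%nat) by (unfold k; lia).
  assert (Hk2 : (k <= 32)%nat) by (unfold k; lia).
  assert (Hm2 : 2 <= 2 ^ k).
  { replace 2 with (2 ^ 1) at 1 by (simpl; lra). apply Rle_pow; [lra|exact Hk1]. }
  assert (HmM : 2 ^ k <= 2 ^ 32) by (apply Rle_pow; [lra|exact Hk2]).
  set (m := 2 ^ k) in *.
  destruct (hmono (2 ^ 32) m n Hm2 HmM) as [H1 _].
  set (b := 1 - / m).
  assert (Hb : 0 < b < 1).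
  { unfold b. assert (/ m <= / 2) by (apply Rinv_le_contravar; lra).
    assert (0 < / m) by (apply Rinv_0_lt_compat; lra). lra. }
  assert (Hu : INR n * (1/2) ^ r < INR n).
  { assert (Hn' : 0 < INR n) by (apply lt_0_INR; lia).
    assert ((1/2) ^ r < 1) by (apply pow_lt_1_compat; lra || lia).
    nra. }
  assert (Hlt : b ^ n < Rpower b (INR n * (1/2) ^ r)).
  { rewrite <- (Rpower_pow n b) by lra.
    unfold Rpower. apply exp_increasing.
    assert (ln b < 0) by (rewrite <- ln_1; apply ln_increasing; lra).
    nra. }
  unfold Rgt. apply Rlt_le_trans with (m * (1 - b ^ n)); [|exact H1].
  apply Rmult_lt_compat_l; lra.
Qed.
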